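(* Let $\mathcal{X}=\{x_k\}_{k=1}^\infty$ be a frame for the real Hilbert space $\ell_2$. The following are equivalent: (1) $\mathcal{X}$ is injective; (2) $\overline{\mathrm{span}}\{\tilde{x}_k\}_{k=1}^\infty=\tilde{\mathbb{H}}$.
   Context: A family $\{x_k\}$ is called injective if whenever a Hilbert–Schmidt self-adjoint operator $T$ on $\ell_2$ satisfies $\langle Tx_k,x_k\rangle=0$ for all $k$, then $T=0$. Let $\tilde{\mathbb{H}}=\left(\sum_{i=1}^\infty\oplus\ell_2\right)_{\ell_2}$ be the $\ell_2$-direct sum of countably many copies of real $\ell_2$, with elements $\vec{x}=(\vec{x}_1,\vec{x}_2,\dots)$ and inner product $\langle\vec{x},\vec{y}\rangle=\sum_i\langle\vec{x}_i,\vec{y}_i\rangle$. For $x=(x_i)_{i=1}^\infty\in\ell_2$ (real), define $\tilde{x}=(\vec{x}_1,\vec{x}_2,\dots)\in\tilde{\mathbb{H}}$ where $\vec{x}_n=(x_nx_n,x_nx_{n+1},x_nx_{n+2},\dots)$ for each $n$. *)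

(* Defs.v *)
From Stdlib Require Import Reals Lra.
From Coquelicot Require Import Coquelicot.
Open Scope R_scope.

(* Real sequences; l2 = square-summable sequences (indices start at 0). *)
Definition l2 (x : nat -> R) : Prop := ex_series (fun i => (x i) ^ 2).
Definition norm2 (x : nat -> R) : R := Series (fun i => (x i) ^ 2).
Definition inner (x y : nat -> R) : R := Series (fun i => x i * y i).

Definition unitv (j : nat) : nat -> R := fun i => if Nat.eqb i j then 1 else 0.

Definition is_frame (X : nat -> nat -> R) : Prop :=
  (forall k, l2 (X k)) /\
  exists A B : R, 0 < A /\ 0 < B /\
    forall x, l2 x ->
      ex_series (fun k => (inner x (X k)) ^ 2) /\
      A * norm2 x <= Series (fun k => (inner x (X k)) ^ 2) /\
      Series (fun k => (inner x (X k)) ^ 2) <= B * norm2 x.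

(* Hilbert-Schmidt self-adjoint (bounded linear) operator on l2,
   represented as a map on sequences whose behaviour on l2 is what matters. *)
Definition is_HS_selfadjoint (T : (nat -> R) -> (nat -> R)) : Prop :=
  (forall x, l2 x -> l2 (T x)) /\
  (forall (a : R) x y, l2 x -> l2 y ->
      T (fun i => a * x i + y i) = (fun i => a * T x i + T y i)) /\
  (exists C : R, forall x, l2 x -> norm2 (T x) <= C * norm2 x) /\
  ex_series (fun j => norm2 (T (unitv j))) /\
  (forall x y, l2 x -> l2 y -> inner (T x) y = inner x (T y)).

Definition injective_family (X : nat -> nat -> R) : Prop :=
  forall T, is_HS_selfadjoint T ->
    (forall k, inner (T (X k)) (X k) = 0) ->
    forall x, l2 x -> T x = (fun _ => 0).

(* The l2-direct sum H~ of countably many copies of l2: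
   y : nat -> (nat -> R), y n = the n-th component. *)
Definition in_Htilde (y : nat -> nat -> R) : Prop :=
  (forall n, l2 (y n)) /\ ex_series (fun n => norm2 (y n)).
Definition normH2 (y : nat -> nat -> R) : R := Series (fun n => norm2 (y n)).

Definition tilde (x : nat -> R) : nat -> nat -> R := fun n m => x n * x (n + m)%nat.

Fixpoint lincomb (X : nat -> nat -> R) (c : nat -> R) (N : nat) : nat -> nat -> R :=
  match N with
  | O => fun _ _ => 0
  | S N' => fun n m => lincomb X c N' n m + c N' * tilde (X N') n m
  end.

(* closed span of {x~_k} equals H~ : the span is dense in H~ *)
Definition closed_span_tilde_is_Htilde (X : nat -> nat -> R) : Prop :=
  forall y, in_Htilde y -> forall eps, 0 < eps ->
    exists (N : nat) (c : nat -> R),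
      normH2 (fun n m => y n m - lincomb X c N n m) < eps.

(* Main.v *)
Require Import Defs.
From Stdlib Require Import Reals Lra Lia Classical ClassicalEpsilon FunctionalExtensionality.
From Coquelicot Require Import Coquelicot.
Open Scope R_scope.

Lemma ser_lim a l : is_series a l <-> is_lim_seq (fun N => sum_f_R0 a N) l.
Proof.
  rewrite is_series_Reals. rewrite is_lim_seq_Reals. unfold infinite_sum, Un_cv. tauto.
Qed.

Lemma ex_ser_lim a : ex_series a -> is_lim_seq (fun N => sum_f_R0 a N) (Series a).
Proof. intro H. apply ser_lim. apply Series_correct. exact H. Qed.

Lemma nonneg_bounded a M : (forall n, 0 <= a n) -> (forall N, sum_f_R0 a N <= M) ->
  ex_series a /\ Series a <= M.
Proof.
  intros Ha HM.
  assert (Hinc: forall n, sum_f_R0 a n <= sum_f_R0 a (S n)).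
  { intro n. simpl. specialize (Ha (S n)). lra. }
  destruct (ex_finite_lim_seq_incr _ M Hinc HM) as [l Hl].
  assert (Hs : is_series a l) by (apply ser_lim; exact Hl).
  split. exists l; exact Hs.
  rewrite (is_series_unique _ _ Hs).
  assert (Rbar_le l M).
  { apply (is_lim_seq_le (sum_f_R0 a) (fun _ => M) l M); [exact HM | exact Hl | apply is_lim_seq_const]. }
  simpl in H. exact H.
Qed.

Lemma partial_le_series a N : (forall n, 0 <= a n) -> ex_series a -> sum_f_R0 a N <= Series a.
Proof.
  intros Ha He. apply is_lim_seq_incr_compare. apply ex_ser_lim; exact He.
  intro n. simpl. specialize (Ha (S n)). lra.
Qed.

Lemma term_le_series a n : (forall n, 0 <= a n) -> ex_series a -> a n <= Series a.
Proof.
  intros Ha He. apply Rle_trans with (sum_f_R0 a n); [|apply partial_le_series; auto].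
  destruct n. simpl; lra. simpl. pose proof (cond_pos_sum a n Ha). lra.
Qed.

Lemma series_nonneg a : (forall n, 0 <= a n) -> ex_series a -> 0 <= Series a.
Proof. intros Ha He. apply Rle_trans with (a 0%nat). apply Ha. apply term_le_series; auto. Qed.

Lemma series_zero a n : (forall n, 0 <= a n) -> ex_series a -> Series a = 0 -> a n = 0.
Proof. intros Ha He H0. pose proof (term_le_series a n Ha He). specialize (Ha n). lra. Qed.

Lemma ex_series_sum (a : nat -> nat -> R) N : (forall j, ex_series (a j)) ->
  ex_series (fun i => sum_f_R0 (fun j => a j i) N) /\
  Series (fun i => sum_f_R0 (fun j => a j i) N) = sum_f_R0 (fun j => Series (a j)) N.
Proof.
  intro H. induction N as [|N IH].
  - simpl. split. apply H. reflexivity.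
  - destruct IH as [IH1 IH2]. simpl. split.
    + apply (ex_series_plus (fun i => sum_f_R0 (fun j => a j i) N) (a (S N))); auto.
    + rewrite Series_plus; auto. rewrite IH2. reflexivity.
Qed.

Lemma sum_lim (u : nat -> nat -> R) (l : nat -> R) M :
  (forall i, is_lim_seq (fun J => u J i) (l i)) ->
  is_lim_seq (fun J => sum_f_R0 (u J) M) (sum_f_R0 l M).
Proof.
  intro H. induction M as [|M IH]; simpl. apply H.
  apply is_lim_seq_plus'; auto.
Qed.

Lemma ex_series_abs_le a g : (forall n, Rabs (a n) <= g n) -> ex_series g -> ex_series a.
Proof. intros H Hg. apply (ex_series_le a g); auto. Qed.

Lemma tannery0 (u : nat -> nat -> R) (g : nat -> R) :
  (forall J i, Rabs (u J i) <= g i) -> ex_series g ->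
  (forall i, is_lim_seq (fun J => u J i) 0) ->
  is_lim_seq (fun J => Series (u J)) 0.
Proof.
  intros Hb Hg Hl.
  assert (Hg0 : forall i, 0 <= g i) by (intro i; eapply Rle_trans; [apply Rabs_pos|apply (Hb 0%nat)]).
  assert (Hex : forall J, ex_series (fun i => Rabs (u J i))).
  { intro J. apply (ex_series_abs_le _ g); auto. intro; rewrite Rabs_Rabsolu; auto. }
  apply is_lim_seq_Reals. intros eps Heps.
  assert (Ht : is_lim_seq (fun M => Series g - sum_f_R0 g M) 0).
  { replace 0 with (Series g - Series g) by ring.
    apply is_lim_seq_minus'. apply is_lim_seq_const. apply ex_ser_lim; auto. }
  apply is_lim_seq_Reals in Ht. destruct (Ht (eps/2)) as [M HM]; [lra|].
  specialize (HM M (le_n _)). unfold R_dist in HM.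
  pose proof (sum_lim (fun J i => Rabs (u J i)) (fun _ => 0) M) as HS.
  assert (HS' : is_lim_seq (fun J => sum_f_R0 (fun i => Rabs (u J i)) M) 0).
  { replace 0 with (sum_f_R0 (fun _ : nat => 0) M). apply HS.
    intro i. pose proof (is_lim_seq_abs _ _ (Hl i)) as H. simpl in H. rewrite Rabs_R0 in H. exact H.
    clear. induction M; simpl; lra. }
  apply is_lim_seq_Reals in HS'. destruct (HS' (eps/2)) as [N HN]; [lra|].
  exists N. intros J HJ. specialize (HN J HJ). unfold R_dist in *. rewrite Rminus_0_r in *.
  rewrite Rabs_right in HN by (apply Rle_ge; apply cond_pos_sum; intro; apply Rabs_pos).
  eapply Rle_lt_trans. apply Series_Rabs. apply Hex.
  rewrite (Series_incr_n _ (S M)) by (auto with arith || apply Hex).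
  simpl pred.
  assert (Series (fun k => Rabs (u J (S M + k)%nat)) <= Series (fun k => g (S M + k)%nat)).
  { apply Series_le. intro; split; [apply Rabs_pos| apply Hb]. apply ex_series_incr_n. exact Hg. }
  assert (Series g = sum_f_R0 g M + Series (fun k => g (S M + k)%nat)).
  { rewrite (Series_incr_n g (S M)); auto with arith. }
  rewrite Rabs_right in HM.
  lra. apply Rle_ge. rewrite H0. ring_simplify. apply series_nonneg.
  intro; auto. apply ex_series_incr_n; exact Hg.
Qed.

Lemma tannery (f : nat -> nat -> R) (g h : nat -> R) :
  (forall J i, Rabs (f J i) <= g i) -> ex_series g ->
  (forall i, is_lim_seq (fun J => f J i) (h i)) ->
  is_lim_seq (fun J => Series (f J)) (Series h).
Proof.
  intros Hb Hg Hl.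
  assert (Hh : forall i, Rabs (h i) <= g i).
  { intro i. pose proof (is_lim_seq_abs _ _ (Hl i)) as H. simpl in H.
    assert (Rbar_le (Rabs (h i)) (g i)).
    { apply (is_lim_seq_le (fun J => Rabs (f J i)) (fun _ => g i)); auto. apply is_lim_seq_const. }
    exact H0. }
  assert (HexF : forall J, ex_series (f J)) by (intro J; apply (ex_series_abs_le _ g); auto).
  assert (HexH : ex_series h) by (apply (ex_series_abs_le _ g); auto).
  pose proof (tannery0 (fun J i => f J i - h i) (fun i => 2 * g i)) as T.
  assert (T' : is_lim_seq (fun J => Series (fun i => f J i - h i)) 0).
  { apply T.
    - intros J i. eapply Rle_trans. apply Rabs_triang. rewrite Rabs_Ropp.
      pose proof (Hb J i). pose proof (Hh i). lra.
    - apply (ex_series_scal_l 2 g). exact Hg.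
    - intro i. replace 0 with (h i - h i) by ring. apply is_lim_seq_minus'. apply Hl. apply is_lim_seq_const. }
  apply is_lim_seq_ext with (fun J => Series (fun i => f J i - h i) + Series h).
  intro J. rewrite Series_minus; auto. ring.
  replace (Finite (Series h)) with (Finite (0 + Series h)) by (f_equal; ring).
  apply is_lim_seq_plus'. exact T'. apply is_lim_seq_const.
Qed.

Lemma abs_sum_le (a : nat -> R) N : Rabs (sum_f_R0 a N) <= sum_f_R0 (fun j => Rabs (a j)) N.
Proof. apply sum_f_R0_triangle. Qed.

Lemma fubini (a : nat -> nat -> R) :
  (forall i, ex_series (fun j => Rabs (a i j))) ->
  ex_series (fun i => Series (fun j => Rabs (a i j))) ->
  (forall j, ex_series (fun i => a i j)) /\
  ex_series (fun j => Series (fun i => a i j)) /\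
  Series (fun j => Series (fun i => a i j)) = Series (fun i => Series (fun j => a i j)).
Proof.
  intros H1 H2.
  set (r := fun i => Series (fun j => Rabs (a i j))).
  assert (Hr : forall i j, Rabs (a i j) <= r i).
  { intros i j. unfold r. apply (term_le_series (fun j => Rabs (a i j))). intro; apply Rabs_pos. auto. }
  assert (Hcol : forall j, ex_series (fun i => Rabs (a i j))).
  { intro j. apply (ex_series_abs_le _ r); auto. intro; rewrite Rabs_Rabsolu; auto. }
  assert (Hcol' : forall j, ex_series (fun i => a i j)).
  { intro j. apply (ex_series_abs_le _ r); auto. }
  assert (Hrow : forall i, ex_series (fun j => a i j)).
  { intro i. apply ex_series_Rabs. auto. }
  set (q := fun j => Series (fun i => Rabs (a i j))).
  assert (Hq : ex_series q).
  { apply (nonneg_bounded q (Series r)).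
    - intro j. apply series_nonneg; auto. intro; apply Rabs_pos.
    - intro N. unfold q.
      destruct (ex_series_sum (fun j i => Rabs (a i j)) N Hcol) as [E1 E2].
      rewrite <- E2. apply Series_le; auto. intro i. split.
      apply cond_pos_sum. intro; apply Rabs_pos.
      unfold r. apply (partial_le_series (fun j => Rabs (a i j))). intro; apply Rabs_pos. auto. }
  assert (Hc : ex_series (fun j => Series (fun i => a i j))).
  { apply (ex_series_abs_le _ q); auto. intro j. unfold q. apply Series_Rabs. auto. }
  split; [auto|split; [auto|]].
  pose proof (ex_ser_lim _ Hc) as L1.
  assert (L2 : is_lim_seq (fun N => Series (fun i => sum_f_R0 (fun j => a i j) N))
                          (Series (fun i => Series (fun j => a i j)))).
  { apply (tannery (fun N i => sum_f_R0 (fun j => a i j) N) r).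
    - intros N i. eapply Rle_trans. apply abs_sum_le.
      apply (partial_le_series (fun j => Rabs (a i j))). intro; apply Rabs_pos. auto.
    - exact H2.
    - intro i. apply ex_ser_lim. auto. }
  apply is_lim_seq_ext with (v := fun N => sum_f_R0 (fun j => Series (fun i => a i j)) N) in L2.
  2:{ intro N. destruct (ex_series_sum (fun j i => a i j) N Hcol') as [_ E]. exact E. }
  pose proof (is_lim_seq_unique _ _ L1). pose proof (is_lim_seq_unique _ _ L2).
  rewrite H in H0. injection H0. auto.
Qed.

Lemma quad_cs (A B S : R) : (forall t, 0 <= A - 2 * t * S + t * t * B) -> S * S <= A * B.
Proof.
  intro H. destruct (Req_dec B 0) as [HB|HB].
  - subst B. destruct (Req_dec S 0) as [HS|HS]. subst; nra.
    specialize (H ((A + 1) / (2 * S))). exfalso.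
    assert (2 * ((A + 1) / (2 * S)) * S = A + 1) by (field; auto). nra.
  - assert (HB0 : 0 <= B).
    { destruct (Rle_lt_dec 0 B); auto. exfalso.
      set (t := (Rabs A + 1)/(-B) + 1).
      assert (Ht : t * B = -(Rabs A + 1) + B) by (unfold t; field; lra).
      assert (Ht1 : 1 <= t). { unfold t. assert (0 < (Rabs A + 1)/(-B)). apply Rdiv_lt_0_compat. pose proof (Rabs_pos A); lra. lra. lra. }
      pose proof (H t) as H1. pose proof (H (-t)) as H2.
      assert (0 <= t*(t-1)) by nra.
      assert (t * t * B <= t * B) by nra.
      pose proof (Rle_abs A).
      assert (E: -t * -t * B = t*t*B) by ring. rewrite E in H2. lra. }
    specialize (H (S / B)).
    assert (2 * (S / B) * S = 2 * (S*S/B)) by (field; auto).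
    assert (S / B * (S / B) * B = S*S/B) by (field; auto).
    assert (S*S/B <= A) by lra.
    apply Rmult_le_compat_r with (r := B) in H2; [|lra].
    replace (S * S / B * B) with (S*S) in H2 by (field; auto). lra.
Qed.

Lemma ex_ext (a b : nat -> R) : (forall n, a n = b n) -> ex_series a -> ex_series b.
Proof. intros. apply (ex_series_ext a b); auto. Qed.
Lemma ex_scal c (a : nat -> R) : ex_series a -> ex_series (fun n => c * a n).
Proof. intro H. apply (ex_ext (fun n => a n * c) (fun n => c * a n)). intro; ring. apply ex_series_scal_r; auto. Qed.
Lemma ex_plus (a b : nat -> R) : ex_series a -> ex_series b -> ex_series (fun n => a n + b n).
Proof. intros. apply (ex_series_plus a b); auto. Qed.

Lemma pow2_nonneg r : 0 <= r ^ 2. Proof. nra. Qed.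

Lemma l2_lin a x y : l2 x -> l2 y -> l2 (fun i => a * x i + y i).
Proof.
  intros Hx Hy. unfold l2 in *.
  apply (ex_series_abs_le _ (fun i => 2 * a^2 * x i ^2 + 2 * y i ^2)).
  - intro i. rewrite Rabs_right by (apply Rle_ge; apply pow2_nonneg).
    pose proof (pow2_nonneg (a * x i - y i)). nra.
  - apply (ex_series_plus (fun i => 2 * a^2 * x i ^2) (fun i => 2 * y i ^2)).
    apply ex_scal; auto. apply ex_scal; auto.
Qed.

Lemma abs_prod_le x y : Rabs (x * y) <= (x^2 + y^2)/2.
Proof.
  rewrite Rabs_mult. pose proof (Rabs_pos x); pose proof (Rabs_pos y).
  rewrite <- (pow2_abs x), <- (pow2_abs y). set (u := Rabs x) in *. set (v := Rabs y) in *.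
  pose proof (pow2_nonneg (u - v)). simpl in *. nra.
Qed.

Lemma inner_ex_abs x y : l2 x -> l2 y -> ex_series (fun i => Rabs (x i * y i)).
Proof.
  intros Hx Hy. apply (ex_series_abs_le _ (fun i => (x i ^2 + y i^2)/2)).
  intro i. rewrite Rabs_Rabsolu. apply abs_prod_le.
  apply (ex_ext (fun i => (/2) * (x i ^2 + y i ^2)) (fun i => (x i ^2 + y i ^2)/2)).
  intro; field.
  apply ex_scal. apply ex_plus; auto.
Qed.

Lemma inner_ex x y : l2 x -> l2 y -> ex_series (fun i => x i * y i).
Proof. intros. apply ex_series_Rabs. apply inner_ex_abs; auto. Qed.

Lemma inner_sym x y : inner x y = inner y x.
Proof. unfold inner. apply Series_ext. intro; ring. Qed.

Lemma norm2_inner x : norm2 x = inner x x.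
Proof. unfold norm2, inner. apply Series_ext. intro; ring. Qed.

Lemma inner_lin_l a x y z : l2 x -> l2 y -> l2 z ->
  inner (fun i => a * x i + y i) z = a * inner x z + inner y z.
Proof.
  intros. unfold inner. rewrite <- Series_scal_l. rewrite <- Series_plus.
  apply Series_ext. intro; ring.
  apply ex_scal. apply inner_ex; auto. apply inner_ex; auto.
Qed.

Lemma inner_lin_r a x y z : l2 x -> l2 y -> l2 z ->
  inner z (fun i => a * x i + y i) = a * inner z x + inner z y.
Proof. intros. rewrite inner_sym, inner_lin_l by auto. rewrite (inner_sym x), (inner_sym y). ring. Qed.

Lemma norm2_nonneg x : l2 x -> 0 <= norm2 x.
Proof. intro. apply series_nonneg; auto. intro; apply pow2_nonneg. Qed.

Lemma l2_opp x : l2 x -> l2 (fun i => - x i).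
Proof. intro H. unfold l2 in *. apply (ex_ext (fun i => x i ^2) (fun i => (- x i)^2)); auto. intro; ring. Qed.

Lemma cs1 x y : l2 x -> l2 y -> inner x y * inner x y <= norm2 x * norm2 y.
Proof.
  intros Hx Hy. apply quad_cs. intro t.
  assert (Hl : l2 (fun i => (-t) * y i + x i)) by (apply l2_lin; auto).
  pose proof (norm2_nonneg _ Hl). rewrite norm2_inner in H.
  rewrite inner_lin_l in H; auto. rewrite !inner_lin_r in H; auto.
  rewrite !norm2_inner. rewrite (inner_sym y x) in H. nra.
Qed.

Lemma l2_abs x : l2 x -> l2 (fun i => Rabs (x i)).
Proof. intro H. unfold l2 in *. apply (ex_ext (fun i => x i ^2) (fun i => Rabs (x i) ^2)); auto. intro. rewrite pow2_abs. auto. Qed.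

Lemma norm2_abs x : norm2 (fun i => Rabs (x i)) = norm2 x.
Proof. unfold norm2. apply Series_ext. intro. rewrite pow2_abs. auto. Qed.

Lemma cs1_abs x y : l2 x -> l2 y ->
  Series (fun i => Rabs (x i * y i)) * Series (fun i => Rabs (x i * y i)) <= norm2 x * norm2 y.
Proof.
  intros. rewrite <- (norm2_abs x), <- (norm2_abs y).
  replace (Series (fun i => Rabs (x i * y i))) with (inner (fun i => Rabs (x i)) (fun i => Rabs (y i))).
  apply cs1; apply l2_abs; auto.
  unfold inner. apply Series_ext. intro. rewrite Rabs_mult. auto.
Qed.

Lemma inner_abs_bound x y : l2 x -> l2 y -> Rabs (inner x y) <= (norm2 x + norm2 y)/2.
Proof.
  intros Hx Hy. unfold inner. eapply Rle_trans. apply Series_Rabs. apply inner_ex_abs; auto.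
  unfold norm2. replace ((Series (fun i => x i ^ 2) + Series (fun i => y i ^ 2)) / 2)
    with (Series (fun i => (x i ^2 + y i^2)/2)).
  apply Series_le. intro; split; [apply Rabs_pos|apply abs_prod_le].
  apply (ex_ext (fun i => (/2) * (x i ^2 + y i ^2))). intro; field. apply ex_scal; apply ex_plus; auto.
  rewrite <- Series_plus by auto. unfold Rdiv. rewrite <- Series_scal_r. apply Series_ext. intro; ring.
Qed.

Lemma norm2_lin_le a x y : l2 x -> l2 y -> norm2 (fun i => a * x i + y i) <= 2 * a^2 * norm2 x + 2 * norm2 y.
Proof.
  intros Hx Hy. unfold norm2.
  rewrite <- (Series_scal_l (2 * a^2)), <- Series_scal_l, <- Series_plus.
  apply Series_le. intro i. split. apply pow2_nonneg. pose proof (pow2_nonneg (a * x i - y i)). nra.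
  apply ex_plus; apply ex_scal; auto. apply ex_scal; auto. apply ex_scal; auto.
Qed.

Definition ipH (y z : nat -> nat -> R) : R := Series (fun n => inner (y n) (z n)).

Lemma inH_lin a y z : in_Htilde y -> in_Htilde z -> in_Htilde (fun n m => a * y n m + z n m).
Proof.
  intros [Hy1 Hy2] [Hz1 Hz2]. split.
  - intro n. apply l2_lin; auto.
  - apply (ex_series_abs_le _ (fun n => 2 * a^2 * norm2 (y n) + 2 * norm2 (z n))).
    intro n. rewrite Rabs_right. apply norm2_lin_le; auto. apply Rle_ge. apply norm2_nonneg. apply l2_lin; auto.
    apply ex_plus; apply ex_scal; auto.
Qed.

Lemma ipH_ex_abs y z : in_Htilde y -> in_Htilde z -> ex_series (fun n => Rabs (inner (y n) (z n))).
Proof.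
  intros [Hy1 Hy2] [Hz1 Hz2].
  apply (ex_series_abs_le _ (fun n => (norm2 (y n) + norm2 (z n))/2)).
  intro n. rewrite Rabs_Rabsolu. apply inner_abs_bound; auto.
  apply (ex_ext (fun i => (/2) * (norm2 (y i) + norm2 (z i)))). intro; field. apply ex_scal; apply ex_plus; auto.
Qed.

Lemma ipH_ex y z : in_Htilde y -> in_Htilde z -> ex_series (fun n => inner (y n) (z n)).
Proof. intros. apply ex_series_Rabs. apply ipH_ex_abs; auto. Qed.

Lemma ipH_sym y z : ipH y z = ipH z y.
Proof. unfold ipH. apply Series_ext. intro; apply inner_sym. Qed.

Lemma normH2_ipH y : normH2 y = ipH y y.
Proof. unfold normH2, ipH. apply Series_ext. intro; apply norm2_inner. Qed.

Lemma ipH_lin_l a x y z : in_Htilde x -> in_Htilde y -> in_Htilde z ->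
  ipH (fun n m => a * x n m + y n m) z = a * ipH x z + ipH y z.
Proof.
  intros Hx Hy Hz. unfold ipH. rewrite <- Series_scal_l. rewrite <- Series_plus.
  apply Series_ext. intro n. apply inner_lin_l. apply Hx. apply Hy. apply Hz.
  apply ex_scal. apply ipH_ex; auto. apply ipH_ex; auto.
Qed.

Lemma ipH_lin_r a x y z : in_Htilde x -> in_Htilde y -> in_Htilde z ->
  ipH z (fun n m => a * x n m + y n m) = a * ipH z x + ipH z y.
Proof. intros. rewrite ipH_sym, ipH_lin_l by auto. rewrite (ipH_sym x), (ipH_sym y). ring. Qed.

Lemma normH2_nonneg y : in_Htilde y -> 0 <= normH2 y.
Proof. intros [H1 H2]. apply series_nonneg; auto. intro; apply norm2_nonneg; auto. Qed.

Lemma csH x y : in_Htilde x -> in_Htilde y -> ipH x y * ipH x y <= normH2 x * normH2 y.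
Proof.
  intros Hx Hy. apply quad_cs. intro t.
  assert (Hl : in_Htilde (fun n m => (-t) * y n m + x n m)) by (apply inH_lin; auto).
  pose proof (normH2_nonneg _ Hl). rewrite normH2_ipH in H.
  rewrite ipH_lin_l in H; auto. rewrite !ipH_lin_r in H; auto.
  rewrite !normH2_ipH. rewrite (ipH_sym y x) in H. nra.
Qed.

Lemma coord_le_norm2 x i : l2 x -> x i ^ 2 <= norm2 x.
Proof. intro. apply (term_le_series (fun i => x i ^2)); auto. intro; apply pow2_nonneg. Qed.

Lemma coord_le_normH2 y n m : in_Htilde y -> y n m ^ 2 <= normH2 y.
Proof.
  intros [H1 H2]. eapply Rle_trans. apply coord_le_norm2. auto.
  apply (term_le_series (fun n => norm2 (y n))); auto. intro; apply norm2_nonneg; auto.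
Qed.

Lemma normH2_zero y n m : in_Htilde y -> normH2 y = 0 -> y n m = 0.
Proof.
  intros Hy H0. pose proof (coord_le_normH2 y n m Hy). rewrite H0 in H. 
  assert (y n m ^ 2 = 0) by (pose proof (pow2_nonneg (y n m)); lra). 
  simpl in H1. nra. 
Qed.

Lemma shift_le a k : (forall n, 0 <= a n) -> ex_series a -> Series (fun m => a (k + m)%nat) <= Series a.
Proof.
  intros Ha He. destruct k. apply Req_le. apply Series_ext. intro; reflexivity.
  rewrite (Series_incr_n a (S k)); auto with arith. simpl pred.
  pose proof (cond_pos_sum a k Ha). lra.
Qed.

Lemma tilde_in x : l2 x -> in_Htilde (tilde x).
Proof.
  intro Hx. unfold tilde.
  assert (Hrow : forall n, l2 (fun m => x n * x (n + m)%nat)).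
  { intro n. unfold l2. apply (ex_ext (fun m => x n ^2 * x (n+m)%nat ^2)). intro; ring.
    apply ex_scal. apply (ex_series_incr_n (fun i => x i ^2) n). exact Hx. }
  split; auto.
  apply (ex_series_abs_le _ (fun n => norm2 x * x n ^2)).
  intro n. rewrite Rabs_right by (apply Rle_ge; apply norm2_nonneg; auto).
  unfold norm2 at 1. rewrite (Series_ext _ (fun m => x n ^2 * x (n+m)%nat ^2)) by (intro; ring).
  rewrite Series_scal_l. rewrite Rmult_comm. apply Rmult_le_compat_r. apply pow2_nonneg.
  apply (shift_le (fun i => x i ^2)). intro; apply pow2_nonneg. auto.
  apply ex_scal. auto.
Qed.

Lemma inH_ext y z : (forall n m, y n m = z n m) -> in_Htilde y -> in_Htilde z.
Proof.
  intros H Hy. replace z with y; auto. apply functional_extensionality; intro n;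
  apply functional_extensionality; intro m; auto.
Qed.

Lemma lincomb_in X c N : (forall k, l2 (X k)) -> in_Htilde (lincomb X c N).
Proof.
  intro HX. induction N as [|N IH]; simpl.
  - split. intro n. unfold l2. apply (ex_ext (fun _ => 0)). intro; simpl; ring.
    exists 0. apply is_series_Reals. intros e He. exists 0%nat. intros. unfold R_dist. 
    rewrite sum_cte. rewrite Rmult_0_l, Rminus_0_r, Rabs_R0. auto.
    apply (ex_ext (fun _ => 0)). intro. unfold norm2. rewrite (Series_ext _ (fun _ => 0)) by (intro; simpl; ring).
    rewrite (Series_ext _ (fun i => 0 * 0)) by (intro; ring). rewrite Series_scal_l. ring.
    exists 0. apply is_series_Reals. intros e He. exists 0%nat. intros. unfold R_dist. 
    rewrite sum_cte. rewrite Rmult_0_l, Rminus_0_r, Rabs_R0. auto.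
  - apply (inH_ext (fun n m => c N * tilde (X N) n m + lincomb X c N n m)). intros; ring.
    apply inH_lin; auto. apply tilde_in; auto.
Qed.

Definition wt (m : nat) : R := match m with O => 1 | _ => 2 end.

Lemma core (s : nat -> nat -> R) (x : nat -> R) :
  (forall i j, s i j = s j i) -> (forall i, l2 (s i)) -> ex_series (fun i => norm2 (s i)) -> l2 x ->
  ex_series (fun i => Series (fun j => s i j * x j) * x i) /\
  Series (fun i => Series (fun j => s i j * x j) * x i) =
  Series (fun n => Series (fun m => (wt m * s n (n+m)%nat) * (x n * x (n+m)%nat))).
Proof.
  intros Hsym Hrow Hhs Hx.
  set (b := fun i j => x i * s i j * x j).
  set (a := fun i j => if Nat.ltb j i then b i j else 0).
  set (Ri := fun i => Series (fun j => Rabs (s i j * x j))).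
  assert (HexR : forall i, ex_series (fun j => Rabs (s i j * x j))) by (intro; apply inner_ex_abs; auto).
  assert (HRi2 : forall i, Ri i * Ri i <= norm2 (s i) * norm2 x) by (intro; apply cs1_abs; auto).
  assert (HRpos : forall i, 0 <= Ri i) by (intro; apply series_nonneg; auto; intro; apply Rabs_pos).
  assert (Hdom : ex_series (fun i => Rabs (x i) * Ri i)).
  { apply (ex_series_abs_le _ (fun i => (x i ^2 + norm2 (s i) * norm2 x)/2)).
    - intro i. rewrite Rabs_right by (apply Rle_ge; apply Rmult_le_pos; auto; apply Rabs_pos).
      rewrite <- (pow2_abs (x i)). pose proof (Rabs_pos (x i)). pose proof (HRi2 i).
      pose proof (pow2_nonneg (Rabs (x i) - Ri i)). simpl in *. nra.
    - apply (ex_ext (fun i => /2 * (x i ^2 + norm2 x * norm2 (s i)))). intro; field.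
      apply ex_scal. apply ex_plus. auto. apply ex_scal; auto. }
  assert (Hbrow : forall i, ex_series (fun j => Rabs (b i j))
             /\ Series (fun j => Rabs (b i j)) = Rabs (x i) * Ri i).
  { intro i. unfold b, Ri. split.
    apply (ex_ext (fun j => Rabs (x i) * Rabs (s i j * x j))). intro; rewrite !Rabs_mult; ring.
    apply ex_scal; auto.
    rewrite <- Series_scal_l. apply Series_ext. intro; rewrite !Rabs_mult; ring. }
  assert (Habsa : forall i j, Rabs (a i j) <= Rabs (b i j)).
  { intros i j. unfold a. destruct (Nat.ltb j i). lra. rewrite Rabs_R0. apply Rabs_pos. }
  assert (Harow : forall i, ex_series (fun j => Rabs (a i j))).
  { intro i. apply (ex_series_abs_le _ (fun j => Rabs (b i j))). intro; rewrite Rabs_Rabsolu; auto. apply Hbrow. }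
  assert (Harow2 : ex_series (fun i => Series (fun j => Rabs (a i j)))).
  { apply (ex_series_abs_le _ (fun i => Rabs (x i) * Ri i)); auto.
    intro i. rewrite Rabs_right by (apply Rle_ge; apply series_nonneg; auto; intro; apply Rabs_pos).
    destruct (Hbrow i) as [E1 E2]. rewrite <- E2. apply Series_le; auto. intro; split; auto; apply Rabs_pos. }
  destruct (fubini a Harow Harow2) as [Fcol [Fex Feq]].
  assert (Hbex : forall i, ex_series (b i)) by (intro; apply ex_series_Rabs; apply Hbrow).
  assert (Haex : forall i, ex_series (a i)) by (intro; apply ex_series_Rabs; auto).
  set (D := fun i => Series (fun m => b i (i + m)%nat)).
  assert (HL : forall i, Series (fun j => s i j * x j) * x i = Series (a i) + D i).
  { intro i. rewrite <- Series_scal_r.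
    rewrite (Series_ext _ (fun j => a i j + (b i j - a i j))) by (intro; unfold b; ring).
    rewrite Series_plus; auto. f_equal. unfold D.
    rewrite (Series_incr_n_aux _ i). apply Series_ext. intro m. unfold a.
    replace (Nat.ltb (i + m) i) with false. ring. symmetry. apply Nat.ltb_ge. lia.
    intros k Hk. unfold a. replace (Nat.ltb k i) with true. ring. symmetry. apply Nat.ltb_lt. auto.
    apply (ex_ext (fun j => b i j + (-1) * a i j)). intro; ring. apply ex_plus; auto. apply ex_scal; auto. }
  assert (HR : forall n, Series (fun m => (wt m * s n (n+m)%nat) * (x n * x (n+m)%nat))
                         = D n + Series (fun i => a i n)).
  { intro n.
    assert (Hsh : ex_series (fun m => b n (n + m)%nat)) by (apply (ex_series_incr_n (b n) n); auto).
    assert (Hsh1 : ex_series (fun m => b n (n + S m)%nat)).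
    { apply (ex_series_incr_1 (fun m => b n (n + m)%nat)); auto. }
    assert (Hcol : Series (fun i => a i n) = Series (fun m => b n (n + S m)%nat)).
    { rewrite (Series_incr_n_aux _ (S n)). apply Series_ext. intro m. unfold a, b.
      replace (Nat.ltb n (S n + m)) with true by (symmetry; apply Nat.ltb_lt; lia).
      rewrite (Hsym (S n + m)%nat n). replace (n + S m)%nat with (S n + m)%nat by lia. ring.
      intros k Hk. unfold a. replace (Nat.ltb n k) with false. ring. symmetry. apply Nat.ltb_ge. lia. }
    rewrite Hcol. unfold D.
    rewrite Series_incr_1. rewrite (Series_incr_1 (fun m => b n (n + m)%nat)) by auto.
    rewrite (Series_ext (fun k => wt (S k) * s n (n + S k)%nat * (x n * x (n + S k)%nat))
                        (fun k => 2 * b n (n + S k)%nat)) by (intro; unfold b, wt; ring).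
    rewrite Series_scal_l. unfold b, wt. replace (n + 0)%nat with n by lia. ring.
    apply (ex_ext (fun m => wt m * b n (n + m)%nat)). intro; unfold b; ring.
    apply (ex_series_abs_le _ (fun m => 2 * Rabs (b n (n+m)%nat))).
    intro m. rewrite Rabs_mult. assert (Rabs (wt m) <= 2) by (destruct m; unfold wt; rewrite Rabs_right; lra).
    pose proof (Rabs_pos (b n (n + m)%nat)). nra.
    apply ex_scal. apply (ex_series_incr_n (fun j => Rabs (b n j)) n). apply Hbrow. }
  assert (HLex : ex_series (fun i => Series (fun j => s i j * x j) * x i)).
  { apply (ex_series_abs_le _ (fun i => Rabs (x i) * Ri i)); auto. intro i.
    rewrite Rabs_mult, Rmult_comm. apply Rmult_le_compat_l. apply Rabs_pos.
    apply Series_Rabs; auto. }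
  assert (Hrowsum : ex_series (fun i => Series (a i))).
  { apply (ex_series_abs_le _ (fun i => Series (fun j => Rabs (a i j)))); auto.
    intro; apply Series_Rabs; auto. }
  assert (HDex : ex_series D).
  { apply (ex_ext (fun i => Series (fun j => s i j * x j) * x i + (-1) * Series (a i))).
    intro i. rewrite HL. ring. apply ex_plus; auto. apply ex_scal; auto. }
  split; auto.
  rewrite (Series_ext _ _ HL). rewrite (Series_ext _ _ HR).
  rewrite !Series_plus; auto. rewrite Feq. apply Rplus_comm.
Qed.

Lemma sum_single (f : nat -> R) j : (forall i, i <> j -> f i = 0) ->
  forall N, sum_f_R0 f N = if Nat.leb j N then f j else 0.
Proof.
  intros H N. induction N as [|N IH]; simpl.
  - destruct j. reflexivity. simpl. apply H. lia.
  - rewrite IH. destruct (Nat.eq_dec j (S N)) as [E|E].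
    + subst j. replace (Nat.leb (S N) N) with false by (symmetry; apply Nat.leb_gt; lia).
      rewrite Nat.leb_refl. ring.
    + rewrite (H (S N)) by auto. destruct (Nat.leb j N) eqn:E1.
      * apply Nat.leb_le in E1. replace (Nat.leb j (S N)) with true by (symmetry; apply Nat.leb_le; lia). ring.
      * apply Nat.leb_gt in E1. replace (Nat.leb j (S N)) with false by (symmetry; apply Nat.leb_gt; lia). ring.
Qed.

Lemma series_single (f : nat -> R) j : (forall i, i <> j -> f i = 0) -> is_series f (f j).
Proof.
  intro H. apply ser_lim. apply is_lim_seq_incr_n with (N := j).
  apply is_lim_seq_ext with (fun _ => f j). intro n. rewrite (sum_single f j H).
  replace (Nat.leb j (n + j)) with true by (symmetry; apply Nat.leb_le; lia). auto.
  apply is_lim_seq_const.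
Qed.

Lemma unitv_ne j i : i <> j -> unitv j i = 0.
Proof. intro H. unfold unitv. destruct (Nat.eqb i j) eqn:E; auto. apply Nat.eqb_eq in E. lia. Qed.
Lemma unitv_eq j : unitv j j = 1.
Proof. unfold unitv. rewrite Nat.eqb_refl. auto. Qed.

Lemma inner_unit y j : inner y (unitv j) = y j.
Proof.
  unfold inner. assert (H : forall i, i <> j -> y i * unitv j i = 0).
  { intros i Hi. rewrite unitv_ne by auto. ring. }
  rewrite (is_series_unique _ _ (series_single (fun i => y i * unitv j i) j H)).
  rewrite unitv_eq. ring.
Qed.

Lemma l2_unit j : l2 (unitv j).
Proof. exists ((unitv j j)^2). apply (series_single (fun i => unitv j i ^ 2) j). intros i Hi. rewrite unitv_ne by auto. ring. Qed.

Lemma l2_zero : l2 (fun _ => 0).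
Proof. exists (0 ^ 2). apply (series_single (fun _ => 0 ^ 2) 0). intros; ring. Qed.

Lemma norm2_zero_vec : norm2 (fun _ => 0) = 0.
Proof. unfold norm2. assert (H : forall i:nat, i <> 0%nat -> 0 ^ 2 = 0) by (intros; ring).
  rewrite (is_series_unique _ _ (series_single (fun _ => 0 ^ 2) 0 H)). ring. Qed.

Lemma sq_to0 (u v : nat -> R) : (forall N, u N ^ 2 <= v N) -> is_lim_seq v 0 -> is_lim_seq u 0.
Proof.
  intros H Hv. apply is_lim_seq_Reals. apply is_lim_seq_Reals in Hv. intros eps He.
  destruct (Hv (eps * eps)) as [N HN]. nra. exists N. intros n Hn. specialize (HN n Hn).
  unfold R_dist in *. rewrite Rminus_0_r in *. specialize (H n).
  pose proof (Rle_abs (v n)). assert (u n ^ 2 < eps * eps) by lra.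
  rewrite <- pow2_abs in H1. pose proof (Rabs_pos (u n)). simpl in H1. nra.
Qed.

Definition trunc (N : nat) (x : nat -> R) : nat -> R := fun i => sum_f_R0 (fun j => x j * unitv j i) N.

Lemma trunc_val N x i : trunc N x i = if Nat.leb i N then x i else 0.
Proof.
  unfold trunc. rewrite (sum_single (fun j => x j * unitv j i) i).
  rewrite unitv_eq, Rmult_1_r. auto.
  intros j Hj. unfold unitv. replace (Nat.eqb i j) with false. ring. symmetry. apply Nat.eqb_neq. auto.
Qed.

Lemma T_zero T : is_HS_selfadjoint T -> T (fun _ => 0) = (fun _ => 0).
Proof.
  intros [H1 [H2 _]]. pose proof (H2 1 _ _ l2_zero l2_zero) as E. simpl in E.
  replace (fun _ : nat => 1 * 0 + 0) with (fun _ : nat => 0) in E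
    by (apply functional_extensionality; intro; ring).
  apply functional_extensionality. intro i. pose proof (f_equal (fun f => f i) E) as E'. simpl in E'. lra.
Qed.

Lemma trunc_S N x : trunc (S N) x = (fun i => x (S N) * unitv (S N) i + trunc N x i).
Proof. apply functional_extensionality; intro i. unfold trunc. simpl. ring. Qed.

Lemma trunc_0 x : trunc 0 x = (fun i => x 0%nat * unitv 0 i + 0).
Proof. apply functional_extensionality; intro i. unfold trunc. simpl. ring. Qed.

Lemma trunc_l2 N x : l2 (trunc N x).
Proof.
  induction N. rewrite trunc_0. apply l2_lin. apply l2_unit. apply l2_zero.
  rewrite trunc_S. apply l2_lin; auto. apply l2_unit.
Qed.

Lemma T_trunc T N x i : is_HS_selfadjoint T ->
  T (trunc N x) i = sum_f_R0 (fun j => T (unitv j) i * x j) N.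
Proof.
  intro HT. pose proof HT as [H1 [H2 _]]. induction N.
  - rewrite trunc_0. rewrite H2 by (apply l2_unit || apply l2_zero). rewrite T_zero by auto. simpl. ring.
  - rewrite trunc_S. rewrite H2 by (apply l2_unit || apply trunc_l2). rewrite IHN. simpl. ring.
Qed.

Lemma T_repr T x i : is_HS_selfadjoint T -> l2 x ->
  is_series (fun j => T (unitv j) i * x j) (T x i).
Proof.
  intros HT Hx. pose proof HT as [H1 [H2 [[C HC] _]]].
  set (r := fun N => fun i => -1 * trunc N x i + x i).
  assert (Hr : forall N, l2 (r N)) by (intro; apply l2_lin; auto; apply trunc_l2).
  assert (Hdec : forall N, T x i = T (trunc N x) i + T (r N) i).
  { intro N. replace x with (fun i => 1 * trunc N x i + r N i) at 1.
    rewrite H2; auto. ring. apply trunc_l2.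
    apply functional_extensionality; intro; unfold r; ring. }
  assert (Hnr : is_lim_seq (fun N => norm2 (r N)) 0).
  { apply is_lim_seq_ext with (fun N => Series (fun i => x i ^2) - sum_f_R0 (fun i => x i ^2) N).
    - intro N. unfold norm2.
      rewrite (Series_incr_n_aux (fun i0 => r N i0 ^ 2) (S N)).
      rewrite (Series_incr_n (fun i => x i ^2) (S N)); auto with arith. simpl pred.
      ring_simplify. apply Series_ext. intro k. unfold r. rewrite trunc_val.
      replace (Nat.leb (S N + k) N) with false by (symmetry; apply Nat.leb_gt; lia). ring.
      intros k Hk. unfold r. rewrite trunc_val. replace (Nat.leb k N) with true by (symmetry; apply Nat.leb_le; lia). ring.
    - replace 0 with (Series (fun i => x i ^2) - Series (fun i => x i ^2)) by ring.
      apply is_lim_seq_minus'. apply is_lim_seq_const. apply ex_ser_lim. auto. }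
  assert (HTr : is_lim_seq (fun N => T (r N) i) 0).
  { apply (sq_to0 _ (fun N => C * norm2 (r N))).
    - intro N. eapply Rle_trans. apply coord_le_norm2. apply H1; auto. apply HC; auto.
    - replace 0 with (C * 0) by ring. apply (is_lim_seq_scal_l _ C 0). auto. }
  apply ser_lim. apply is_lim_seq_ext with (fun N => T x i - T (r N) i).
  intro N. rewrite (Hdec N). rewrite T_trunc by auto. ring.
  replace (Finite (T x i)) with (Finite (T x i - 0)) by (f_equal; ring). apply is_lim_seq_minus'. apply is_lim_seq_const. auto.
Qed.

Lemma l2_ext x y : (forall i, x i = y i) -> l2 x -> l2 y.
Proof. intros H Hx. unfold l2 in *. apply (ex_ext (fun i => x i ^2)); auto. intro; rewrite H; auto. Qed.

Lemma series_zero_fun : Series (fun _ : nat => 0) = 0.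
Proof. rewrite (Series_ext _ (fun _ => 0 * 0)) by (intro; ring). rewrite Series_scal_l. ring. Qed.

Lemma inner_zero_r x : inner x (fun _ => 0) = 0.
Proof. unfold inner. rewrite (Series_ext _ (fun _ => 0)) by (intro; ring). apply series_zero_fun. Qed.

Lemma ipH_zero_r z : ipH z (fun _ _ => 0) = 0.
Proof. unfold ipH. rewrite (Series_ext _ (fun _ => 0)) by (intro; apply inner_zero_r). apply series_zero_fun. Qed.

Lemma wt_pos m : 1 <= wt m <= 2.
Proof. destruct m; simpl; lra. Qed.

Lemma ipH_lincomb X (z : nat -> nat -> R) c N : (forall k, l2 (X k)) -> in_Htilde z ->
  (forall k, ipH z (tilde (X k)) = 0) -> ipH z (lincomb X c N) = 0.
Proof.
  intros HX Hz Hk. induction N as [|N IH].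
  - simpl. apply ipH_zero_r.
  - simpl. replace (fun n m => lincomb X c N n m + c N * tilde (X N) n m)
      with (fun n m => c N * tilde (X N) n m + lincomb X c N n m)
      by (apply functional_extensionality; intro; apply functional_extensionality; intro; ring).
    rewrite ipH_lin_r; auto. rewrite Hk, IH. ring. apply tilde_in; auto. apply lincomb_in; auto.
Qed.

Lemma dirB X : (forall k, l2 (X k)) -> closed_span_tilde_is_Htilde X -> injective_family X.
Proof.
  intros HX Hd T HT Hk x Hx.
  pose proof HT as [H1 [H2 [[C HC] [Hhs Hsa]]]].
  set (t := fun i j => T (unitv j) i).
  assert (Hsym : forall i j, t i j = t j i).
  { intros i j. unfold t. rewrite <- (inner_unit (T (unitv j)) i).
    rewrite Hsa by apply l2_unit. rewrite inner_sym. apply inner_unit. }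
  assert (Hrow : forall i, l2 (t i)).
  { intro i. apply (l2_ext (T (unitv i))). intro j. rewrite Hsym. auto. apply H1. apply l2_unit. }
  assert (Hhs' : ex_series (fun i => norm2 (t i))).
  { apply (ex_ext (fun i => norm2 (T (unitv i)))); auto. intro i. unfold norm2. apply Series_ext.
    intro j. rewrite Hsym. auto. }
  set (z := fun n m => wt m * t n (n + m)%nat).
  assert (Hz : in_Htilde z).
  { assert (Hzr : forall n, ex_series (fun m => 4 * t n (n+m)%nat ^ 2)).
    { intro n. apply ex_scal. apply (ex_series_incr_n (fun j => t n j ^2) n). apply Hrow. }
    assert (Hzl : forall n, l2 (z n)).
    { intro n. unfold l2. refine (ex_series_abs_le _ _ _ (Hzr n)). intro m.
      rewrite Rabs_right by (apply Rle_ge; apply pow2_nonneg). unfold z.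
      pose proof (wt_pos m). pose proof (pow2_nonneg (t n (n+m)%nat)).
      replace ((wt m * t n (n + m)%nat) ^ 2) with (wt m ^ 2 * t n (n + m)%nat ^ 2) by ring.
      apply Rmult_le_compat_r; auto. simpl. nra. }
    split; auto.
    apply (ex_series_abs_le _ (fun n => 4 * norm2 (t n))).
    - intro n. rewrite Rabs_right by (apply Rle_ge; apply norm2_nonneg; auto).
      apply Rle_trans with (Series (fun m => 4 * t n (n+m)%nat ^ 2)).
      apply Series_le; auto. intro m. split. apply pow2_nonneg. unfold z.
      pose proof (wt_pos m). pose proof (pow2_nonneg (t n (n+m)%nat)).
      replace ((wt m * t n (n + m)%nat) ^ 2) with (wt m ^ 2 * t n (n + m)%nat ^ 2) by ring.
      apply Rmult_le_compat_r; auto. simpl. nra.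
      rewrite Series_scal_l. apply Rmult_le_compat_l. lra. apply (shift_le (fun j => t n j ^2)).
      intro; apply pow2_nonneg. apply Hrow.
    - apply ex_scal; auto. }
  assert (Hip : forall y, l2 y -> ipH z (tilde y) = inner (T y) y).
  { intros y Hy. unfold inner at 1.
    rewrite (Series_ext (fun i => T y i * y i) (fun i => Series (fun j => t i j * y j) * y i)).
    2:{ intro i. f_equal. symmetry. apply is_series_unique. apply T_repr; auto. }
    destruct (core t y Hsym Hrow Hhs' Hy) as [_ E]. rewrite E.
    unfold ipH, inner, tilde, z. reflexivity. }
  assert (Hperp : forall c N, ipH z (lincomb X c N) = 0).
  { intros c N. apply ipH_lincomb; auto. intro k. rewrite Hip; auto. }
  assert (Hz0 : normH2 z = 0).
  { destruct (Rle_lt_or_eq_dec 0 (normH2 z) (normH2_nonneg z Hz)) as [Hp|Hp]; [|auto].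
    exfalso. destruct (Hd z Hz (normH2 z) Hp) as [N [c Hc]].
    set (L := lincomb X c N) in *.
    assert (HL : in_Htilde L) by (apply lincomb_in; auto).
    assert (Hd' : in_Htilde (fun n m => -1 * L n m + z n m)) by (apply inH_lin; auto).
    pose proof (csH z (fun n m => -1 * L n m + z n m) Hz Hd') as Hcs.
    rewrite ipH_lin_r in Hcs; auto. unfold L in Hcs. rewrite Hperp in Hcs. rewrite <- normH2_ipH in Hcs.
    replace (fun n m => -1 * lincomb X c N n m + z n m) with (fun n m => z n m - L n m) in Hcs
      by (apply functional_extensionality; intro; apply functional_extensionality; intro; unfold L; ring).
    nra. }
  assert (Ht0 : forall i j, t i j = 0).
  { assert (forall i m, t i (i + m)%nat = 0).
    { intros i m. pose proof (normH2_zero z i m Hz Hz0). unfold z in H. pose proof (wt_pos m). nra. }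
    intros i j. destruct (Nat.le_gt_cases i j).
    - replace j with (i + (j - i))%nat by lia. auto.
    - rewrite Hsym. replace i with (j + (i - j))%nat by lia. auto. }
  apply functional_extensionality. intro i.
  rewrite <- (is_series_unique _ _ (T_repr T x i HT Hx)).
  rewrite (Series_ext _ (fun _ => 0)). apply series_zero_fun.
  intro j. fold (t i j). rewrite Ht0. ring.
Qed.

Lemma fext2 (f g : nat -> nat -> R) : (forall n m, f n m = g n m) -> f = g.
Proof. intro H. apply functional_extensionality; intro; apply functional_extensionality; intro; auto. Qed.

Lemma normH2_scal c f : normH2 (fun n m => c * f n m) = c^2 * normH2 f.
Proof.
  unfold normH2, norm2. rewrite <- Series_scal_l. apply Series_ext. intro n.
  rewrite <- Series_scal_l. apply Series_ext. intro m. ring.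
Qed.

Lemma norm2_ex2 x y : l2 x -> l2 y -> ex_series (fun i => (x i - y i)^2) /\ ex_series (fun i => (x i + y i)^2).
Proof.
  intros Hx Hy. split.
  - apply (l2_ext (fun i => (-1) * y i + x i)). intro; ring. apply l2_lin; auto.
  - apply (l2_ext (fun i => 1 * y i + x i)). intro; ring. apply l2_lin; auto.
Qed.

Lemma parallelogram a b : in_Htilde a -> in_Htilde b ->
  normH2 (fun n m => a n m - b n m) + normH2 (fun n m => a n m + b n m) = 2 * normH2 a + 2 * normH2 b.
Proof.
  intros Ha Hb.
  assert (Hm : in_Htilde (fun n m => a n m - b n m))
    by (apply (inH_ext (fun n m => (-1) * b n m + a n m)); [intros; ring| apply inH_lin; auto]).
  assert (Hp : in_Htilde (fun n m => a n m + b n m))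
    by (apply (inH_ext (fun n m => 1 * b n m + a n m)); [intros; ring| apply inH_lin; auto]).
  unfold normH2. rewrite <- Series_plus by (apply Hm || apply Hp).
  rewrite <- (Series_scal_l 2 (fun n => norm2 (a n))), <- (Series_scal_l 2 (fun n => norm2 (b n))).
  rewrite <- Series_plus. apply Series_ext. intro n. unfold norm2.
  destruct (norm2_ex2 (a n) (b n)) as [E1 E2]. apply Ha. apply Hb.
  rewrite <- Series_plus by auto.
  rewrite <- (Series_scal_l 2 (fun m => a n m ^2)), <- (Series_scal_l 2 (fun m => b n m ^2)).
  rewrite <- Series_plus. apply Series_ext. intro; ring.
  apply ex_scal; apply Ha. apply ex_scal; apply Hb.
  apply ex_scal; apply Ha. apply ex_scal; apply Hb.
Qed.

Lemma normH2_sum_le a b : in_Htilde a -> in_Htilde b ->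
  normH2 (fun n m => a n m + b n m) <= 2 * normH2 a + 2 * normH2 b.
Proof.
  intros Ha Hb. pose proof (parallelogram a b Ha Hb).
  assert (Hm : in_Htilde (fun n m => a n m - b n m))
    by (apply (inH_ext (fun n m => (-1) * b n m + a n m)); [intros; ring| apply inH_lin; auto]).
  pose proof (normH2_nonneg _ Hm). lra.
Qed.

Lemma normH2_ext f g : (forall n m, f n m = g n m) -> normH2 f = normH2 g.
Proof. intro H. rewrite (fext2 f g H). auto. Qed.

Lemma ipH_ext f g h : (forall n m, f n m = g n m) -> ipH f h = ipH g h.
Proof. intro H. rewrite (fext2 f g H). auto. Qed.

Lemma expand u v t : in_Htilde u -> in_Htilde v ->
  normH2 (fun n m => (-t) * v n m + u n m) = normH2 u - 2 * t * ipH u v + t * t * normH2 v.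
Proof.
  intros Hu Hv. rewrite normH2_ipH. rewrite ipH_lin_l; try (apply inH_lin); auto.
  rewrite !ipH_lin_r; try (apply inH_lin); auto.
  rewrite !normH2_ipH. rewrite (ipH_sym v u). ring.
Qed.

Lemma small_zero r K : (forall l : nat, r <= K / INR (S l)) -> r <= 0.
Proof.
  intro H. destruct (Rle_lt_dec r 0) as [|Hr]; auto. exfalso.
  destruct (archimed_cor1 (r / (Rabs K + 1))) as [N [HN HN0]].
  apply Rdiv_lt_0_compat; auto. pose proof (Rabs_pos K); lra.
  destruct N. lia. specialize (H N).
  assert (HI : 0 < INR (S N)) by (apply lt_0_INR; lia).
  assert (K / INR (S N) <= Rabs K * / INR (S N)).
  { unfold Rdiv. apply Rmult_le_compat_r. left; apply Rinv_0_lt_compat; auto. apply Rle_abs. }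
  assert (Rabs K * / INR (S N) <= Rabs K * (r / (Rabs K + 1))).
  { apply Rmult_le_compat_l. apply Rabs_pos. lra. }
  assert (Rabs K * (r / (Rabs K + 1)) < r).
  { pose proof (Rabs_pos K). apply Rmult_lt_reg_r with (Rabs K + 1). lra.
    replace (Rabs K * (r / (Rabs K + 1)) * (Rabs K + 1)) with (Rabs K * r) by (field; lra). nra. }
  lra.
Qed.

Lemma term_le_sum (g : nat -> R) n : (forall i, 0 <= g i) -> g n <= sum_f_R0 g n.
Proof. intro H. destruct n. simpl; lra. simpl. pose proof (cond_pos_sum g n H). lra. Qed.

Lemma inH_of_bounded f M :
  (forall A B, sum_f_R0 (fun n => sum_f_R0 (fun m => f n m ^2) B) A <= M) ->
  in_Htilde f /\ normH2 f <= M.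
Proof.
  intro H.
  assert (Hpos : forall n B, 0 <= sum_f_R0 (fun m => f n m ^2) B)
    by (intros; apply cond_pos_sum; intro; apply pow2_nonneg).
  assert (Hrow : forall n, l2 (f n) /\ norm2 (f n) <= M).
  { intro n. apply nonneg_bounded. intro; apply pow2_nonneg. intro B.
    eapply Rle_trans. apply (term_le_sum (fun n => sum_f_R0 (fun m => f n m ^2) B) n). auto. apply H. }
  assert (Hsum : forall A, sum_f_R0 (fun n => norm2 (f n)) A <= M).
  { intro A. assert (L : is_lim_seq (fun B => sum_f_R0 (fun n => sum_f_R0 (fun m => f n m ^2) B) A)
                                    (sum_f_R0 (fun n => norm2 (f n)) A)).
    { apply (sum_lim (fun B n => sum_f_R0 (fun m => f n m ^2) B) (fun n => norm2 (f n))).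
      intro n. apply ex_ser_lim. apply Hrow. }
    assert (Rbar_le (sum_f_R0 (fun n => norm2 (f n)) A) M).
    { apply (is_lim_seq_le _ (fun _ => M) _ M (fun B => H A B) L). apply is_lim_seq_const. }
    exact H0. }
  destruct (nonneg_bounded (fun n => norm2 (f n)) M) as [E1 E2]; auto.
  intro n. apply norm2_nonneg. apply Hrow.
  split; [split|]; auto. intro n; apply Hrow.
Qed.

Lemma partial_le_normH2 f A B : in_Htilde f ->
  sum_f_R0 (fun n => sum_f_R0 (fun m => f n m ^2) B) A <= normH2 f.
Proof.
  intros [H1 H2]. apply Rle_trans with (sum_f_R0 (fun n => norm2 (f n)) A).
  apply sum_Rle. intros n _. apply partial_le_series. intro; apply pow2_nonneg. apply H1.
  apply partial_le_series. intro; apply norm2_nonneg; auto. auto.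
Qed.

Lemma lincomb_ext X c c' N : (forall k, (k < N)%nat -> c k = c' k) -> lincomb X c N = lincomb X c' N.
Proof.
  intro H. induction N; simpl; auto. rewrite IHN by (intros; apply H; lia). rewrite H by lia. auto.
Qed.

Lemma lincomb_tail X c N M : (forall k, (N <= k)%nat -> c k = 0) -> lincomb X c (N + M) = lincomb X c N.
Proof.
  intro H. induction M. rewrite Nat.add_0_r. auto.
  replace (N + S M)%nat with (S (N + M)) by lia. simpl. rewrite IHM. rewrite H by lia.
  apply fext2; intros; ring.
Qed.

Lemma lincomb_lin X a c d N :
  lincomb X (fun k => a * c k + d k) N = (fun n m => a * lincomb X c N n m + lincomb X d N n m).
Proof. induction N; simpl. apply fext2; intros; ring. rewrite IHN. apply fext2; intros; ring. Qed.

Lemma lincomb_zero X N : lincomb X (fun _ => 0) N = (fun _ _ => 0).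
Proof. induction N; simpl; auto. rewrite IHN. apply fext2; intros; ring. Qed.

Definition Sp X (v : nat -> nat -> R) : Prop := exists N c, v = lincomb X c N.

Lemma Sp_lin X a u v : Sp X u -> Sp X v -> Sp X (fun n m => a * u n m + v n m).
Proof.
  intros [N1 [c1 E1]] [N2 [c2 E2]].
  set (c1' := fun k => if Nat.ltb k N1 then c1 k else 0).
  set (c2' := fun k => if Nat.ltb k N2 then c2 k else 0).
  assert (F1 : u = lincomb X c1' (N1 + N2)).
  { rewrite lincomb_tail. rewrite E1. apply lincomb_ext. intros k Hk. unfold c1'.
    replace (Nat.ltb k N1) with true; auto. symmetry; apply Nat.ltb_lt; auto.
    intros k Hk. unfold c1'. replace (Nat.ltb k N1) with false; auto. symmetry; apply Nat.ltb_ge; auto. }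
  assert (F2 : v = lincomb X c2' (N1 + N2)).
  { rewrite Nat.add_comm. rewrite lincomb_tail. rewrite E2. apply lincomb_ext. intros k Hk. unfold c2'.
    replace (Nat.ltb k N2) with true; auto. symmetry; apply Nat.ltb_lt; auto.
    intros k Hk. unfold c2'. replace (Nat.ltb k N2) with false; auto. symmetry; apply Nat.ltb_ge; auto. }
  exists (N1 + N2)%nat, (fun k => a * c1' k + c2' k). rewrite lincomb_lin. rewrite F1, F2. auto.
Qed.

Lemma Sp_tilde X k : Sp X (tilde (X k)).
Proof.
  exists (S k), (fun j => if Nat.eqb j k then 1 else 0). simpl.
  rewrite (lincomb_ext X _ (fun _ => 0)). rewrite lincomb_zero. rewrite Nat.eqb_refl.
  apply fext2; intros; ring.
  intros j Hj. replace (Nat.eqb j k) with false; auto. symmetry; apply Nat.eqb_neq; lia.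
Qed.

Lemma Sp_in X v : (forall k, l2 (X k)) -> Sp X v -> in_Htilde v.
Proof. intros HX [N [c E]]. subst. apply lincomb_in; auto. Qed.

Lemma delta_lim : is_lim_seq (fun l => / INR (S l)) 0.
Proof.
  assert (H : is_lim_seq (fun l => INR (S l)) p_infty).
  { apply (is_lim_seq_incr_1 INR). apply is_lim_seq_INR. }
  pose proof (is_lim_seq_inv _ _ H) as H'. simpl in H'. apply H'. discriminate.
Qed.

Lemma delta_pos l : 0 < / INR (S l).
Proof. apply Rinv_0_lt_compat. apply lt_0_INR. lia. Qed.

Lemma delta_mono l k : (l <= k)%nat -> / INR (S k) <= / INR (S l).
Proof. intro H. apply Rinv_le_contravar. apply lt_0_INR; lia. apply le_INR. lia. Qed.

Lemma Sp_ext X u v : (forall n m, u n m = v n m) -> Sp X u -> Sp X v.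
Proof. intros H Hu. rewrite <- (fext2 u v H). auto. Qed.

Lemma Sp_zero X : Sp X (fun _ _ => 0).
Proof. exists 0%nat, (fun _ => 0). reflexivity. Qed.

Lemma Sp_scal X a u : Sp X u -> Sp X (fun n m => a * u n m).
Proof. intro H. apply (Sp_ext X (fun n m => a * u n m + 0)). intros; ring. apply (Sp_lin X a u (fun _ _ => 0)); auto. apply Sp_zero. Qed.

Lemma inH_diff a b : in_Htilde a -> in_Htilde b -> in_Htilde (fun n m => a n m - b n m).
Proof. intros. apply (inH_ext (fun n m => (-1) * b n m + a n m)). intros; ring. apply inH_lin; auto. Qed.

Lemma proj_exists X y eps : (forall k, l2 (X k)) -> in_Htilde y -> 0 < eps ->
  (forall v, Sp X v -> eps <= normH2 (fun n m => y n m - v n m)) ->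
  exists z, in_Htilde z /\ 0 < normH2 z /\ forall k, ipH z (tilde (X k)) = 0.
Proof.
  intros HX Hy Heps Hfar.
  set (D := fun v : nat -> nat -> R => normH2 (fun n m => y n m - v n m)).
  set (E := fun r => exists v, Sp X v /\ r = - D v).
  assert (Hb : bound E). { exists (-eps). intros r [v [Hv Er]]. subst r. specialize (Hfar v Hv). unfold D. lra. }
  assert (Hne : exists r, E r). { exists (- D (fun _ _ => 0)). exists (fun _ _ => 0). split; auto. apply Sp_zero. }
  destruct (completeness E Hb Hne) as [mm [Hub Hleast]].
  set (d := - mm).
  assert (Hlow : forall v, Sp X v -> d <= D v).
  { intros v Hv. assert (E (- D v)) by (exists v; auto). specialize (Hub _ H). unfold d. lra. }
  assert (Hde : eps <= d).
  { assert (mm <= - eps). { apply Hleast. intros r [v [Hv Er]]. subst r. specialize (Hfar v Hv). unfold D. lra. }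
    unfold d; lra. }
  assert (Happ : forall l, exists v, Sp X v /\ D v < d + / INR (S l)).
  { intro l. apply NNPP. intro Hn. assert (mm <= mm - / INR (S l)).
    { apply Hleast. intros r [v [Hv Er]]. subst r. destruct (Rle_lt_dec (D v) (d + / INR (S l))) as [H1|H1].
      destruct H1 as [H1|H1]. exfalso; apply Hn; exists v; auto. unfold d in H1. lra. unfold d in H1. lra. }
    pose proof (delta_pos l). lra. }
  set (w := fun l => proj1_sig (constructive_indefinite_description _ (Happ l))).
  assert (Hw : forall l, Sp X (w l) /\ D (w l) < d + / INR (S l)).
  { intro l. unfold w. destruct (constructive_indefinite_description _ (Happ l)) as [v Hv]. simpl. auto. }
  assert (HwH : forall l, in_Htilde (w l)) by (intro l; apply (Sp_in X); auto; apply Hw).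
  assert (Hyw : forall l, in_Htilde (fun n m => y n m - w l n m)) by (intro; apply inH_diff; auto).
  assert (Hcau : forall l k, normH2 (fun n m => w l n m - w k n m) <= 2 * / INR (S l) + 2 * / INR (S k)).
  { intros l k. pose proof (parallelogram _ _ (Hyw k) (Hyw l)) as P.
    set (mid := fun n m => /2 * w l n m + /2 * w k n m).
    assert (Hmid : Sp X mid) by (apply Sp_lin; [|apply Sp_scal]; apply Hw).
    rewrite (normH2_ext _ (fun n m => w l n m - w k n m)) in P by (intros; ring).
    rewrite (normH2_ext (fun n m => (y n m - w k n m) + (y n m - w l n m)) (fun n m => 2 * (y n m - mid n m))) in P by (intros; unfold mid; field).
    rewrite normH2_scal in P. pose proof (Hlow mid Hmid). unfold D in *.
    pose proof (Hw l) as [_ H1]. pose proof (Hw k) as [_ H2]. simpl in P. lra. }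
  assert (Hcoord : forall n m, ex_finite_lim_seq (fun l => w l n m)).
  { intros n m. apply ex_lim_seq_cauchy_corr. intro e.
    destruct (archimed_cor1 (e * e / 4)) as [N [HN HN0]]. pose proof (cond_pos e). nra.
    exists N. intros p q Hp Hq.
    assert (Hsq : (w p n m - w q n m) ^ 2 <= 2 * / INR (S p) + 2 * / INR (S q)).
    { eapply Rle_trans; [|apply Hcau]. apply (coord_le_normH2 (fun n m => w p n m - w q n m)).
      apply inH_diff; auto. }
    assert (/ INR (S p) < e * e / 4).
    { eapply Rle_lt_trans; [|apply HN]. apply Rinv_le_contravar. apply lt_0_INR; lia. apply le_INR; lia. }
    assert (/ INR (S q) < e * e / 4).
    { eapply Rle_lt_trans; [|apply HN]. apply Rinv_le_contravar. apply lt_0_INR; lia. apply le_INR; lia. }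
    pose proof (cond_pos e). rewrite <- pow2_abs in Hsq. pose proof (Rabs_pos (w p n m - w q n m)).
    set (aa := Rabs (w p n m - w q n m)) in *. replace (aa ^ 2) with (aa * aa) in Hsq by ring.
    assert (aa * aa < e * e) by lra. nra. }
  set (p := fun n m => real (Lim_seq (fun l => w l n m))).
  assert (Hp : forall n m, is_lim_seq (fun l => w l n m) (p n m)).
  { intros n m. destruct (Hcoord n m) as [L HL]. unfold p. rewrite (is_lim_seq_unique _ _ HL). simpl. auto. }
  assert (F1 : forall l, in_Htilde (fun n m => p n m - w l n m) /\
                         normH2 (fun n m => p n m - w l n m) <= 2 * / INR (S l)).
  { intro l. apply inH_of_bounded. intros A B.
    assert (L1 : is_lim_seq (fun k => sum_f_R0 (fun n => sum_f_R0 (fun m => (w k n m - w l n m) ^2) B) A)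
                            (sum_f_R0 (fun n => sum_f_R0 (fun m => (p n m - w l n m) ^2) B) A)).
    { apply (sum_lim (fun k n => sum_f_R0 (fun m => (w k n m - w l n m) ^2) B)). intro n.
      apply (sum_lim (fun k m => (w k n m - w l n m) ^2)). intro m.
      apply (is_lim_seq_ext (fun k => (w k n m - w l n m) * (w k n m - w l n m))). intro; ring.
      replace ((p n m - w l n m) ^2) with ((p n m - w l n m) * (p n m - w l n m)) by ring.
      apply is_lim_seq_mult'; apply is_lim_seq_minus'; auto; apply is_lim_seq_const. }
    assert (L2 : is_lim_seq (fun k => 2 * / INR (S l) + 2 * / INR (S k)) (2 * / INR (S l))).
    { replace (Finite (2 * / INR (S l))) with (Finite (2 * / INR (S l) + 2 * 0)) by (f_equal; ring).
      apply is_lim_seq_plus'. apply is_lim_seq_const. apply (is_lim_seq_scal_l _ 2 0). apply delta_lim. }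
    assert (Rbar_le (sum_f_R0 (fun n => sum_f_R0 (fun m => (p n m - w l n m) ^2) B) A) (2 * / INR (S l))).
    { refine (is_lim_seq_le _ _ _ _ _ L1 L2). intro k. eapply Rle_trans.
      apply (partial_le_normH2 (fun n m => w k n m - w l n m)). apply inH_diff; auto. rewrite Rplus_comm; apply Hcau. }
    exact H. }
  set (z := fun n m => y n m - p n m).
  assert (Hz : in_Htilde z).
  { apply (inH_ext (fun n m => (-1) * (p n m - w 0%nat n m) + (y n m - w 0%nat n m))).
    intros; unfold z; ring. apply inH_lin; auto. apply F1. }
  exists z. split; auto. split.
  -
    destruct (Rle_lt_or_eq_dec 0 (normH2 z) (normH2_nonneg z Hz)) as [Hpz|Hpz]; auto. exfalso.
    assert (Hb8 : forall l, eps <= 0 + 4 * / INR (S l)).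
    { intro l. eapply Rle_trans. apply (Hfar (w l)). apply Hw.
      rewrite (normH2_ext _ (fun n m => z n m + (p n m - w l n m))) by (intros; unfold z; ring).
      eapply Rle_trans. apply normH2_sum_le; auto. apply F1. rewrite <- Hpz. pose proof (F1 l) as [_ F]. lra. }
    assert (eps <= 0). { apply (small_zero eps 4). intro l. specialize (Hb8 l). unfold Rdiv. lra. }
    lra.
  - intro k. set (v := tilde (X k)).
    assert (Hv : in_Htilde v) by (apply tilde_in; auto).
    assert (Hsq : forall l, ipH z v * ipH z v <= (6 * normH2 v) / INR (S l)).
    { intro l. set (u := fun n m => y n m - w l n m).
      set (S1 := ipH u v). set (S2 := ipH (fun n m => p n m - w l n m) v).
      assert (Eq : ipH z v = S1 - S2).
      { unfold S1, S2. rewrite (ipH_ext z (fun n m => (-1) * (p n m - w l n m) + u n m)).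
        2:{ intros; unfold z, u; ring. }
        rewrite ipH_lin_l. ring. apply F1. apply Hyw. apply Hv. }
      assert (H1 : S1 * S1 <= / INR (S l) * normH2 v).
      { apply quad_cs. intro t.
        assert (Hs : Sp X (fun n m => t * v n m + w l n m)) by (apply Sp_lin; [apply Sp_tilde|apply Hw]).
        pose proof (Hlow _ Hs) as Hl. unfold D in Hl.
        rewrite (normH2_ext _ (fun n m => (-t) * v n m + u n m)) in Hl by (intros; unfold u; ring).
        rewrite expand in Hl; [| apply Hyw | apply Hv]. pose proof (Hw l) as [_ Hwl]. unfold D in Hwl. fold u in Hwl.
        unfold S1. lra. }
      assert (H2 : S2 * S2 <= 2 * / INR (S l) * normH2 v).
      { eapply Rle_trans. apply csH. apply F1. auto. apply Rmult_le_compat_r. apply normH2_nonneg; auto. apply F1. }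
      rewrite Eq. pose proof (pow2_nonneg (S1 + S2)). unfold Rdiv.
      assert ((S1 - S2) * (S1 - S2) <= 2 * (S1 * S1) + 2 * (S2 * S2)) by (simpl in *; nra). lra. }
    assert (ipH z v * ipH z v <= 0) by (apply (small_zero _ (6 * normH2 v)); auto).
    nra.
Qed.

Lemma dom_lemma (s : nat -> nat -> R) x y :
  (forall i, l2 (s i)) -> ex_series (fun i => norm2 (s i)) -> l2 x -> l2 y ->
  ex_series (fun i => Rabs (y i) * Series (fun j => Rabs (s i j * x j))).
Proof.
  intros Hrow Hhs Hx Hy.
  set (Ri := fun i => Series (fun j => Rabs (s i j * x j))).
  assert (HRi2 : forall i, Ri i * Ri i <= norm2 (s i) * norm2 x) by (intro; apply cs1_abs; auto).
  assert (HRpos : forall i, 0 <= Ri i).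
  { intro; apply series_nonneg. intro; apply Rabs_pos. apply inner_ex_abs; auto. }
  apply (ex_series_abs_le _ (fun i => (y i ^2 + norm2 (s i) * norm2 x)/2)).
  - intro i. fold (Ri i). rewrite Rabs_right by (apply Rle_ge; apply Rmult_le_pos; auto; apply Rabs_pos).
    rewrite <- (pow2_abs (y i)). pose proof (Rabs_pos (y i)). pose proof (HRi2 i).
    pose proof (pow2_nonneg (Rabs (y i) - Ri i)). simpl in *. nra.
  - apply (ex_ext (fun i => /2 * (y i ^2 + norm2 x * norm2 (s i)))). intro; field.
    apply ex_scal. apply ex_plus. auto. apply ex_scal; auto.
Qed.

Lemma z_to_T X z : (forall k, l2 (X k)) -> in_Htilde z -> (forall k, ipH z (tilde (X k)) = 0) ->
  injective_family X -> normH2 z = 0.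
Proof.
  intros HX Hz Hk Hinj. destruct Hz as [Hz1 Hz2].
  set (s := fun i j => if Nat.leb i j then z i (j - i)%nat / wt (j - i) else z j (i - j)%nat / wt (i - j)).
  assert (Hwt : forall m, wt m <> 0) by (intro m; pose proof (wt_pos m); lra).
  assert (Hsym : forall i j, s i j = s j i).
  { intros i j. unfold s. destruct (Nat.leb i j) eqn:E1; destruct (Nat.leb j i) eqn:E2; auto.
    apply Nat.leb_le in E1; apply Nat.leb_le in E2. replace j with i by lia. auto.
    apply Nat.leb_gt in E1; apply Nat.leb_gt in E2. lia. }
  assert (Hzs : forall n m, wt m * s n (n + m)%nat = z n m).
  { intros n m. unfold s. replace (Nat.leb n (n+m)) with true by (symmetry; apply Nat.leb_le; lia).
    replace (n + m - n)%nat with m by lia. field. auto. }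
  set (U := fun i j => if Nat.leb i j then z i (j - i)%nat ^2 else 0).
  set (L := fun i j => if Nat.ltb j i then z j (i - j)%nat ^2 else 0).
  assert (Hsq : forall i j, s i j ^2 <= U i j + L i j).
  { intros i j. unfold s, U, L. 
    assert (K : forall a m, (a / wt m) ^2 <= a ^2).
    { intros a m. pose proof (wt_pos m). unfold Rdiv. rewrite Rpow_mult_distr.
      assert (0 < / wt m <= 1).
      { split. apply Rinv_0_lt_compat. lra. rewrite <- (Rinv_1). apply Rinv_le_contravar. lra. lra. }
      assert ((/ wt m) ^ 2 <= 1) by (simpl; nra).
      pose proof (pow2_nonneg a). pose proof (pow2_nonneg (/ wt m)). nra. }
    destruct (Nat.leb i j) eqn:E1.
    - apply Nat.leb_le in E1. replace (Nat.ltb j i) with false by (symmetry; apply Nat.ltb_ge; lia).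
      pose proof (K (z i (j - i)%nat) (j - i)%nat). lra.
    - apply Nat.leb_gt in E1. replace (Nat.ltb j i) with true by (symmetry; apply Nat.ltb_lt; lia).
      pose proof (K (z j (i - j)%nat) (i - j)%nat). lra. }
  assert (HUex : forall i, ex_series (U i) /\ Series (U i) = norm2 (z i)).
  { intro i. split.
    - apply (ex_series_incr_n (U i) i). apply (ex_ext (fun k => z i k ^2)). 
      intro k. unfold U. replace (Nat.leb i (i + k)) with true by (symmetry; apply Nat.leb_le; lia).
      replace (i + k - i)%nat with k by lia. auto. apply Hz1.
    - rewrite (Series_incr_n_aux (U i) i). unfold norm2. apply Series_ext. intro k. unfold U.
      replace (Nat.leb i (i + k)) with true by (symmetry; apply Nat.leb_le; lia).
      replace (i + k - i)%nat with k by lia. auto.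
      intros k Hk'. unfold U. replace (Nat.leb i k) with false by (symmetry; apply Nat.leb_gt; lia). auto. }
  set (a' := fun j i => L i j).
  assert (Ha'row : forall j, ex_series (fun i => Rabs (a' j i)) /\ Series (fun i => Rabs (a' j i)) <= norm2 (z j)).
  { intro j.
    assert (Hsh : forall k, Rabs (a' j (S j + k)%nat) = z j (S k) ^2).
    { intro k. unfold a', L. replace (Nat.ltb j (S j + k)) with true by (symmetry; apply Nat.ltb_lt; lia).
      replace (S j + k - j)%nat with (S k) by lia. apply Rabs_right. apply Rle_ge; apply pow2_nonneg. }
    assert (Hex1 : ex_series (fun k => z j (S k) ^2)).
    { apply (ex_series_incr_1 (fun k => z j k ^2)). apply Hz1. }
    assert (Hex : ex_series (fun i => Rabs (a' j i))).
    { apply (ex_series_incr_n _ (S j)). apply (ex_ext (fun k => z j (S k) ^2)). intro; rewrite Hsh; auto. exact Hex1. }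
    split; auto.
    rewrite (Series_incr_n_aux _ (S j)).
    rewrite (Series_ext _ (fun k => z j (1 + k)%nat ^2)) by (intro; rewrite Hsh; auto).
    apply (shift_le (fun k => z j k ^2)). intro; apply pow2_nonneg. apply Hz1.
    intros k Hk'. unfold a', L. replace (Nat.ltb j k) with false by (symmetry; apply Nat.ltb_ge; lia). apply Rabs_R0. }
  assert (Ha'2 : ex_series (fun j => Series (fun i => Rabs (a' j i)))).
  { apply (ex_series_abs_le _ (fun j => norm2 (z j))); auto. intro j.
    rewrite Rabs_right. apply Ha'row. apply Rle_ge. apply series_nonneg. intro; apply Rabs_pos. apply Ha'row. }
  destruct (fubini a' (fun j => proj1 (Ha'row j)) Ha'2) as [HLex [HLex2 _]].
  assert (HLi : forall i, ex_series (L i)) by exact HLex.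
  assert (HLpos : forall i j, 0 <= L i j) by (intros; unfold L; destruct (Nat.ltb j i); [apply pow2_nonneg|lra]).
  assert (HUpos : forall i j, 0 <= U i j) by (intros; unfold U; destruct (Nat.leb i j); [apply pow2_nonneg|lra]).
  assert (Hrow : forall i, l2 (s i)).
  { intro i. unfold l2. apply (ex_series_abs_le _ (fun j => U i j + L i j)).
    intro j. rewrite Rabs_right. apply Hsq. apply Rle_ge; apply pow2_nonneg.
    apply ex_plus. apply HUex. auto. }
  assert (Hhs : ex_series (fun i => norm2 (s i))).
  { apply (ex_series_abs_le _ (fun i => norm2 (z i) + Series (L i))).
    intro i. rewrite Rabs_right by (apply Rle_ge; apply norm2_nonneg; auto).
    destruct (HUex i) as [E1 E2]. rewrite <- E2. rewrite <- Series_plus; auto.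
    apply Series_le. intro j. split. apply pow2_nonneg. apply Hsq. apply ex_plus; auto.
    apply ex_plus; auto. }
  set (T := fun (x : nat -> R) i => inner (s i) x).
  assert (HT : is_HS_selfadjoint T).
  { split; [|split; [|split; [|split]]].
    - intros x Hx. unfold l2, T. apply (ex_series_abs_le _ (fun i => norm2 x * norm2 (s i))).
      intro i. rewrite Rabs_right by (apply Rle_ge; apply pow2_nonneg).
      rewrite Rmult_comm. replace (inner (s i) x ^2) with (inner (s i) x * inner (s i) x) by ring.
      apply cs1; auto. apply ex_scal; auto.
    - intros a x y Hx Hy. unfold T. apply functional_extensionality; intro i. apply inner_lin_r; auto.
    - exists (Series (fun i => norm2 (s i))). intros x Hx. unfold norm2 at 1. unfold T.
      rewrite <- Series_scal_r. apply Series_le. intro i. split. apply pow2_nonneg.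
      replace (inner (s i) x ^2) with (inner (s i) x * inner (s i) x) by ring. apply cs1; auto.
      apply ex_series_scal_r. auto.
    - apply (ex_ext (fun j => norm2 (s j))); auto. intro j. unfold T, norm2. apply Series_ext.
      intro i. rewrite inner_unit. rewrite Hsym. auto.
    - intros x y Hx Hy. unfold T.
      set (a := fun i j => s i j * x j * y i).
      assert (Hr : forall i, ex_series (fun j => Rabs (a i j))).
      { intro i. apply (ex_ext (fun j => Rabs (y i) * Rabs (s i j * x j))). intro; unfold a; rewrite !Rabs_mult; ring.
        apply ex_scal. apply inner_ex_abs; auto. }
      assert (Hr2 : ex_series (fun i => Series (fun j => Rabs (a i j)))).
      { apply (ex_ext (fun i => Rabs (y i) * Series (fun j => Rabs (s i j * x j)))).
        intro i. rewrite <- Series_scal_l. apply Series_ext. intro; unfold a; rewrite !Rabs_mult; ring.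
        apply dom_lemma; auto. }
      destruct (fubini a Hr Hr2) as [_ [_ F]].
      unfold inner at 1 3.
      rewrite (Series_ext (fun i => inner (s i) x * y i) (fun i => Series (fun j => a i j))).
      rewrite <- F. apply Series_ext. intro j. unfold inner. rewrite <- Series_scal_l. apply Series_ext.
      intro i. unfold a. rewrite Hsym. ring.
      intro i. unfold inner. rewrite <- Series_scal_r. apply Series_ext. intro; unfold a; ring. }
  assert (HkT : forall k, inner (T (X k)) (X k) = 0).
  { intro k. rewrite <- (Hk k). destruct (core s (X k) Hsym Hrow Hhs (HX k)) as [_ E].
    unfold T. unfold inner at 1. simpl. unfold inner in E |- *. rewrite E.
    unfold ipH, tilde. apply Series_ext. intro n. apply Series_ext. intro m. rewrite Hzs. auto. }
  assert (Hs0 : forall i j, s i j = 0).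
  { intros i j. pose proof (Hinj T HT HkT (unitv j) (l2_unit j)) as E.
    pose proof (f_equal (fun f => f i) E) as E'. simpl in E'. unfold T in E'. rewrite inner_unit in E'. auto. }
  rewrite (normH2_ext z (fun _ _ => 0)). unfold normH2. rewrite (Series_ext _ (fun _ => 0)).
  apply series_zero_fun. intro; apply norm2_zero_vec.
  intros n m. rewrite <- Hzs. rewrite Hs0. ring.
Qed.

Lemma dirA X : (forall k, l2 (X k)) -> injective_family X -> closed_span_tilde_is_Htilde X.
Proof.
  intros HX Hinj y Hy eps Heps. apply NNPP. intro Hno.
  assert (Hfar : forall v, Sp X v -> eps <= normH2 (fun n m => y n m - v n m)).
  { intros v [N [c E]]. subst v. destruct (Rle_lt_dec eps (normH2 (fun n m => y n m - lincomb X c N n m))); auto.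
    exfalso. apply Hno. exists N, c. auto. }
  destruct (proj_exists X y eps HX Hy Heps Hfar) as [z [Hz [Hpos Hperp]]].
  pose proof (z_to_T X z HX Hz Hperp Hinj). lra.
Qed.

Theorem mainTheorem11 (X : nat -> nat -> R) (hX : is_frame X) :
  injective_family X <-> closed_span_tilde_is_Htilde X.
Proof.
  destruct hX as [HX _]. split. apply dirA; auto. apply dirB; auto.
Qed.
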